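(* Let $\mathcal{P}=\{1,\dots,p\}$, let $M(1),\dots,M(p)\in\mathbb{R}^{n\times n}$ be exponentially stable (Hurwitz) matrices, and let $N\in\mathbb{R}^{n\times n}$ be a fixed matrix. Let $\tau_D>0$, $N_0>0$ and $\lambda>0$. Then there exists $g_0>0$ such that for every $g\ge g_0$ there is a constant $c>0$ such that, for every switching signal $\sigma\in\mathcal{S}_{ave}(\tau_D,N_0)$ and every initial condition, the solution of $\dot x=\big(N+gM(\sigma(t))\big)x$ satisfies $\|x(t)\|\le c\,e^{-\lambda t}\|x(0)\|$ for all $t\ge0$.
   Context: A switching signal is a piecewise-constant, right-continuous map $\sigma:[0,\infty)\to\mathcal{P}$ with finitely many discontinuities on each bounded interval. For $t\ge t_0\ge0$, $N_\sigma(t_0,t)$ is the number of discontinuities of $\sigma$ in the open interval $(t_0,t)$, and $\mathcal{S}_{ave}(\tau_D,N_0)$ is the set of switching signals with $N_\sigma(t_0,t)\le N_0+\frac{t-t_0}{\tau_D}$ for all $t\ge t_0\ge0$. $\|\cdot\|$ is any vector norm (with induced matrix norm). *)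

(* Defs.v *)
(* classical reals. Vectors in R^n are functions nat -> R
   (components 0..n-1), n x n matrices are functions nat -> nat -> R. *)
From Stdlib Require Import Reals Lra List.
Import ListNotations.
Open Scope R_scope.

(* the 1-norm on R^n (any norm works, all norms are equivalent) *)
Definition vnorm (n : nat) (v : nat -> R) : R :=
  fold_right Rplus 0 (map (fun i => Rabs (v i)) (seq 0 n)).

Definition mat_vec (n : nat) (A : nat -> nat -> R) (v : nat -> R) (i : nat) : R :=
  fold_right Rplus 0 (map (fun j => A i j * v j) (seq 0 n)).

Definition right_deriv (f : R -> R) (t l : R) : Prop :=
  forall eps, 0 < eps -> exists delta, 0 < delta /\
    forall h, 0 < h < delta -> Rabs ((f (t + h) - f t) / h - l) < eps.

(* x is a solution on [0,oo) of xdot = A(t) x, where A(t) is piecewise constant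
   and right-continuous: x is continuous on [0,oo) and its right derivative
   at every t >= 0 equals A(t) x(t). *)
Definition is_solution (n : nat) (A : R -> nat -> nat -> R) (x : R -> nat -> R) : Prop :=
  forall i, (i < n)%nat ->
    (forall t, 0 < t -> continuity_pt (fun s => x s i) t) /\
    (forall t, 0 <= t -> right_deriv (fun s => x s i) t (mat_vec n (A t) (x t) i)).

Definition exp_stable (n : nat) (A : nat -> nat -> R) : Prop :=
  exists c a, 0 < c /\ 0 < a /\
    forall x, is_solution n (fun _ => A) x ->
      forall t, 0 <= t -> vnorm n (x t) <= c * exp (- (a * t)) * vnorm n (x 0).

(* switching signal with values in P = {1,...,p}: piecewise constant,
   right-continuous, finitely many discontinuities on bounded intervals
   (equivalently: locally constant to the right of every t >= 0, and
   locally constant to the left of every t > 0). *)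
Definition switching_signal (p : nat) (sigma : R -> nat) : Prop :=
  (forall t, 0 <= t -> (1 <= sigma t <= p)%nat) /\
  (forall t, 0 <= t -> exists eps, 0 < eps /\
      forall u, t <= u < t + eps -> sigma u = sigma t) /\
  (forall t, 0 < t -> exists eps, 0 < eps /\ exists k,
      forall u, t - eps < u < t -> sigma u = k).

Definition discont (sigma : R -> nat) (s : R) : Prop :=
  ~ (exists eps, 0 < eps /\ forall u, Rabs (u - s) < eps -> sigma u = sigma s).

(* sigma in S_ave(tauD, N0): N_sigma(t0,t) <= N0 + (t - t0)/tauD,
   where N_sigma(t0,t) = number of discontinuities in (t0,t); stated as: every
   finite family of distinct discontinuities in (t0,t) has at most that size. *)
Definition in_Save (tauD N0 : R) (sigma : R -> nat) : Prop :=
  forall t0 t, 0 <= t0 -> t0 <= t ->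
    forall l : list R, NoDup l ->
      (forall s, In s l -> t0 < s < t /\ discont sigma s) ->
      INR (length l) <= N0 + (t - t0) / tauD.

(* Main.v *)
Require Import Defs.
From Stdlib Require Import Reals Lra Lia List Classical.
From Coquelicot Require Coquelicot.
Import ListNotations.
Open Scope R_scope.


Definition lsum (l : list nat) (f : nat -> R) : R := fold_right Rplus 0 (map f l).

Lemma lsum_plus l f g : lsum l (fun i => f i + g i) = lsum l f + lsum l g.
Proof. induction l; unfold lsum in *; simpl; [lra|]. rewrite IHl; lra. Qed.
Lemma lsum_scal l c f : lsum l (fun i => c * f i) = c * lsum l f.
Proof. induction l; unfold lsum in *; simpl; [lra|]. rewrite IHl; lra. Qed.
Lemma lsum_le l f g : (forall i, In i l -> f i <= g i) -> lsum l f <= lsum l g.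
Proof. induction l; unfold lsum in *; simpl; intros H; [lra|].
  pose proof (H a (or_introl eq_refl)). assert (fold_right Rplus 0 (map f l) <= fold_right Rplus 0 (map g l)) by (apply IHl; auto). lra. Qed.
Lemma lsum_ext l f g : (forall i, In i l -> f i = g i) -> lsum l f = lsum l g.
Proof. intros H; apply Rle_antisym; apply lsum_le; intros i Hi; rewrite (H i Hi); lra. Qed.
Lemma lsum_abs l f : Rabs (lsum l f) <= lsum l (fun i => Rabs (f i)).
Proof. induction l; unfold lsum in *; simpl. rewrite Rabs_R0; lra.
  eapply Rle_trans; [apply Rabs_triang|]. lra. Qed.
Lemma lsum_nonneg l f : (forall i, In i l -> 0 <= f i) -> 0 <= lsum l f.
Proof. induction l; unfold lsum in *; simpl; intros H; [lra|].
  pose proof (H a (or_introl eq_refl)). assert (0 <= fold_right Rplus 0 (map f l)) by (apply IHl; auto). lra. Qed.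
Lemma lsum_elem l f j : (forall i, In i l -> 0 <= f i) -> In j l -> f j <= lsum l f.
Proof. induction l; simpl; intros H Hj; [contradiction|]. unfold lsum in *; simpl.
  destruct Hj as [<-|Hj].
  - assert (0 <= fold_right Rplus 0 (map f l)) by (apply lsum_nonneg; auto). lra.
  - assert (f j <= fold_right Rplus 0 (map f l)) by (apply IHl; auto). pose proof (H a (or_introl eq_refl)). lra. Qed.
Lemma lsum_const l c : lsum l (fun _ => c) = INR (length l) * c.
Proof. induction l; unfold lsum in *; simpl. lra. rewrite IHl. destruct (length l); simpl; lra. Qed.

Lemma in_seq0 i n : In i (seq 0 n) <-> (i < n)%nat.
Proof. rewrite in_seq; lia. Qed.

Lemma vnorm_lsum n v : vnorm n v = lsum (seq 0 n) (fun i => Rabs (v i)).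
Proof. reflexivity. Qed.
Lemma mat_vec_lsum n A v i : mat_vec n A v i = lsum (seq 0 n) (fun j => A i j * v j).
Proof. reflexivity. Qed.

Lemma vnorm_nonneg n v : 0 <= vnorm n v.
Proof. rewrite vnorm_lsum. apply lsum_nonneg; intros; apply Rabs_pos. Qed.
Lemma vnorm_ext n v w : (forall i, (i < n)%nat -> v i = w i) -> vnorm n v = vnorm n w.
Proof. intros H; rewrite !vnorm_lsum; apply lsum_ext; intros i Hi; rewrite H; auto; apply in_seq0; auto. Qed.
Lemma comp_le_vnorm n v i : (i < n)%nat -> Rabs (v i) <= vnorm n v.
Proof. intros H; rewrite vnorm_lsum. apply (lsum_elem _ (fun i => Rabs (v i))).
  intros; apply Rabs_pos. apply in_seq0; auto. Qed.
Lemma vnorm_triang n v w : vnorm n (fun i => v i + w i) <= vnorm n v + vnorm n w.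
Proof. rewrite !vnorm_lsum, <- lsum_plus. apply lsum_le; intros; apply Rabs_triang. Qed.
Lemma vnorm_sub_le n v w : vnorm n v <= vnorm n w + vnorm n (fun i => v i - w i).
Proof. eapply Rle_trans; [|apply (vnorm_triang n w (fun i => v i - w i))].
  right. apply vnorm_ext; intros; ring. Qed.
Lemma vnorm_scal n c v : vnorm n (fun i => c * v i) = Rabs c * vnorm n v.
Proof. rewrite !vnorm_lsum, <- lsum_scal. apply lsum_ext; intros; apply Rabs_mult. Qed.
Lemma vnorm_bound n v e : (forall i, (i < n)%nat -> Rabs (v i) <= e) -> vnorm n v <= INR n * e.
Proof. intros H. rewrite vnorm_lsum. rewrite <- (seq_length n 0) at 2. rewrite <- lsum_const.
  apply lsum_le; intros i Hi; apply H, in_seq0; auto. Qed.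

Definition mnorm n (A : nat -> nat -> R) := lsum (seq 0 n) (fun i => lsum (seq 0 n) (fun j => Rabs (A i j))).
Lemma mnorm_nonneg n A : 0 <= mnorm n A.
Proof. apply lsum_nonneg; intros; apply lsum_nonneg; intros; apply Rabs_pos. Qed.
Lemma mat_vec_bound n A v : vnorm n (mat_vec n A v) <= mnorm n A * vnorm n v.
Proof. rewrite vnorm_lsum. unfold mnorm. rewrite Rmult_comm, <- lsum_scal.
  apply lsum_le; intros i Hi. rewrite mat_vec_lsum. eapply Rle_trans; [apply lsum_abs|].
  rewrite <- lsum_scal. apply lsum_le; intros j Hj. rewrite Rabs_mult.
  rewrite (Rmult_comm (vnorm n v)). apply Rmult_le_compat_l. apply Rabs_pos.
  apply comp_le_vnorm, in_seq0; auto. Qed.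
Lemma mat_vec_ext n A v w i : (forall j, (j < n)%nat -> v j = w j) -> mat_vec n A v i = mat_vec n A w i.
Proof. intros H; rewrite !mat_vec_lsum; apply lsum_ext; intros j Hj; rewrite H; auto; apply in_seq0; auto. Qed.
Lemma mat_vec_sub n A v w i : mat_vec n A (fun j => v j - w j) i = mat_vec n A v i - mat_vec n A w i.
Proof. rewrite !mat_vec_lsum. unfold Rminus. rewrite <- (Rmult_1_l (lsum _ (fun j => A i j * w j))).
  rewrite Ropp_mult_distr_l, <- lsum_scal, <- lsum_plus. apply lsum_ext; intros; ring. Qed.
Lemma mat_vec_add n A v w i : mat_vec n A (fun j => v j + w j) i = mat_vec n A v i + mat_vec n A w i.
Proof. rewrite !mat_vec_lsum, <- lsum_plus. apply lsum_ext; intros; ring. Qed.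
Lemma mat_vec_scal n A c v i : mat_vec n A (fun j => c * v j) i = c * mat_vec n A v i.
Proof. rewrite !mat_vec_lsum, <- lsum_scal. apply lsum_ext; intros; ring. Qed.
Lemma mat_vec_madd n N M g v i : mat_vec n (fun i j => N i j + g * M i j) v i = mat_vec n N v i + g * mat_vec n M v i.
Proof. rewrite !mat_vec_lsum, <- lsum_scal, <- lsum_plus. apply lsum_ext; intros; ring. Qed.

Lemma fin_delta n (P : nat -> R -> Prop) :
  (forall i d d', 0 < d' <= d -> P i d -> P i d') ->
  (forall i, (i < n)%nat -> exists d, 0 < d /\ P i d) ->
  exists d, 0 < d /\ forall i, (i < n)%nat -> P i d.
Proof. intros Hm. induction n; intros H.
  - exists 1; split; [lra|intros; lia].
  - destruct IHn as [d1 [Hd1 H1]]. intros; apply H; lia.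
    destruct (H n) as [d2 [Hd2 H2]]; [lia|].
    exists (Rmin d1 d2); split. apply Rmin_pos; auto.
    intros i Hi. destruct (Nat.eq_dec i n) as [->|].
    + apply (Hm _ d2); auto. split. apply Rmin_pos; auto. apply Rmin_r.
    + apply (Hm _ d1); [|apply H1; lia]. split. apply Rmin_pos; auto. apply Rmin_l.
Qed.

Module Part2.
Import Coquelicot.Coquelicot.

Fixpoint mpow n (A : nat -> nat -> R) k (v : nat -> R) : nat -> R :=
  match k with O => v | S k => mat_vec n A (mpow n A k v) end.

Lemma mpow_bound n A k v : vnorm n (mpow n A k v) <= mnorm n A ^ k * vnorm n v.
Proof. induction k; simpl. lra.
  eapply Rle_trans; [apply mat_vec_bound|]. rewrite Rmult_assoc.
  apply Rmult_le_compat_l. apply mnorm_nonneg. auto. Qed.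

Definition coef n A v i k := mpow n A k v i / INR (Factorial.fact k).

Lemma term_le_exp y k : 0 <= y -> y ^ k / INR (Factorial.fact k) <= exp y.
Proof. intros Hy. eapply Rle_trans; [|apply (exp_ge_taylor y k Hy)].
  destruct k. simpl; lra. simpl. 
  assert (0 <= sum_f_R0 (fun k0 : nat => y ^ k0 / INR (Factorial.fact k0)) k).
  { apply cond_pos_sum. intros m. apply Rdiv_le_0_compat. apply pow_le; auto. apply INR_fact_lt_0. }
  lra. Qed.

Lemma coef_radius n A v i : (i < n)%nat -> forall x, Rbar_lt (Rabs x) (CV_radius (coef n A v i)).
Proof. intros Hi x.
  apply Rbar_lt_le_trans with (Rabs x + 1). simpl; lra.
  destruct (CV_radius_bounded (coef n A v i)) as [Hub _]. apply Hub.
  exists (vnorm n v * exp (mnorm n A * (Rabs x + 1))). intros k.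
  set (r := Rabs x + 1). assert (0 <= r) by (unfold r; pose proof (Rabs_pos x); lra).
  unfold coef. rewrite Rabs_mult. unfold Rdiv. rewrite Rabs_mult.
  rewrite (Rabs_right (/ _)) by (left; apply Rinv_0_lt_compat, INR_fact_lt_0).
  rewrite <- RPow_abs, (Rabs_right r) by lra.
  eapply Rle_trans with (mnorm n A ^ k * vnorm n v * / INR (Factorial.fact k) * r ^ k).
  { apply Rmult_le_compat_r. apply pow_le; auto. apply Rmult_le_compat_r.
    left; apply Rinv_0_lt_compat, INR_fact_lt_0.
    eapply Rle_trans; [apply comp_le_vnorm; eauto|apply mpow_bound]. }
  replace (mnorm n A ^ k * vnorm n v * / INR (Factorial.fact k) * r ^ k) with
    (vnorm n v * ((mnorm n A * r) ^ k / INR (Factorial.fact k))) by (rewrite Rpow_mult_distr; field; apply INR_fact_neq_0).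
  apply Rmult_le_compat_l. apply vnorm_nonneg. apply term_le_exp.
  apply Rmult_le_pos; auto. apply mnorm_nonneg.
Qed.

Lemma PSeries_lsum (l : list nat) (c : nat -> R) (b : nat -> nat -> R) t :
  (forall j, In j l -> ex_pseries (b j) t) ->
  ex_pseries (fun k => lsum l (fun j => c j * b j k)) t /\
  PSeries (fun k => lsum l (fun j => c j * b j k)) t = lsum l (fun j => c j * PSeries (b j) t).
Proof. induction l; intros H.
  - unfold lsum; simpl. split. apply CV_radius_inside. rewrite CV_radius_const_0. simpl; auto.
    apply PSeries_const_0.
  - destruct IHl as [IH1 IH2]. intros; apply H; simpl; auto.
    assert (E : forall k, lsum (a :: l) (fun j => c j * b j k) = PS_plus (PS_scal (c a) (b a)) (fun k => lsum l (fun j => c j * b j k)) k).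
    { intros k. reflexivity. }
    assert (Hs : ex_pseries (PS_scal (c a) (b a)) t).
    { apply ex_pseries_scal. unfold mult; simpl; ring. apply H; simpl; auto. }
    split.
    + eapply ex_pseries_ext. intros k; symmetry; apply E. apply ex_pseries_plus; auto.
    + rewrite (PSeries_ext _ _ _ E). rewrite PSeries_plus; auto. rewrite PSeries_scal, IH2. reflexivity.
Qed.

Lemma exists_sol n A v : exists y, is_solution n (fun _ => A) y /\ forall i, y 0 i = v i.
Proof.
  exists (fun t i => PSeries (coef n A v i) t). split.
  2:{ intros i. rewrite PSeries_0. unfold coef; simpl; lra. }
  intros i Hi.
  assert (HD : forall t, derivable_pt_lim (fun s => PSeries (coef n A v i) s) t (mat_vec n A (fun j => PSeries (coef n A v j) t) i)).
  { intros t. apply is_derive_Reals.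
    replace (mat_vec n A (fun j => PSeries (coef n A v j) t) i) with (PSeries (PS_derive (coef n A v i)) t).
    apply is_derive_PSeries. apply coef_radius; auto.
    rewrite mat_vec_lsum.
    destruct (PSeries_lsum (seq 0 n) (fun j => A i j) (fun j => coef n A v j) t) as [_ E].
    { intros j Hj. apply CV_radius_inside, coef_radius. apply in_seq0; auto. }
    rewrite <- E. apply PSeries_ext. intros k. unfold PS_derive, coef. simpl mpow.
    rewrite mat_vec_lsum.
    assert (INR (Factorial.fact (S k)) = INR (S k) * INR (Factorial.fact k)) by (rewrite <- mult_INR; reflexivity).
    assert (INR (S k) <> 0) by (apply not_0_INR; lia). pose proof (INR_fact_neq_0 k).
    transitivity (/ INR (Factorial.fact k) * lsum (seq 0 n) (fun j => A i j * mpow n A k v j)).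
    { rewrite H. field. auto. }
    rewrite <- lsum_scal. apply lsum_ext; intros; field; auto. }
  split.
  - intros t _. apply derivable_continuous_pt. exists (mat_vec n A (fun j => PSeries (coef n A v j) t) i). apply HD.
  - intros t _ eps Heps. destruct (HD t eps Heps) as [d Hd]. exists d. split. apply cond_pos.
    intros h Hh. apply Hd. lra. rewrite Rabs_right; lra.
Qed.

End Part2.
Import Part2.


Lemma cont_of_eps f t : (forall e, 0 < e -> exists d, 0 < d /\ forall s, Rabs (s - t) < d -> Rabs (f s - f t) < e) -> continuity_pt f t.
Proof. intros H e He. destruct (H e He) as [d [Hd H']]. exists d; split; auto.
  intros s [_ Hs]. apply H'. exact Hs. Qed.
Lemma eps_of_cont f t : continuity_pt f t -> forall e, 0 < e -> exists d, 0 < d /\ forall s, Rabs (s - t) < d -> Rabs (f s - f t) < e.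
Proof. intros H e He. destruct (H e He) as [d [Hd H']]. exists d; split; auto.
  intros s Hs. destruct (Req_dec s t) as [->|Hne]. unfold Rminus; rewrite Rplus_opp_r, Rabs_R0; auto.
  apply H'. split; [split; [exact I|intro E; apply Hne; auto]|exact Hs]. Qed.

Lemma rd_cont f t l : right_deriv f t l -> forall e, 0 < e -> exists d, 0 < d /\ forall h, 0 < h < d -> Rabs (f (t + h) - f t) < e.
Proof. intros H e He. destruct (H 1 Rlt_0_1) as [d [Hd H']].
  exists (Rmin d (e / (Rabs l + 1 + 1))). split. apply Rmin_pos; auto. apply Rdiv_lt_0_compat; auto. pose proof (Rabs_pos l); lra.
  intros h [Hh1 Hh2]. assert (h < d) by (eapply Rlt_le_trans; [apply Hh2|apply Rmin_l]).
  assert (h < e / (Rabs l + 1 + 1)) by (eapply Rlt_le_trans; [apply Hh2|apply Rmin_r]).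
  specialize (H' h (conj Hh1 H0)).
  assert (Rabs ((f (t + h) - f t) / h) < Rabs l + 1).
  { pose proof (Rabs_triang_inv ((f (t + h) - f t) / h) l). lra. }
  replace (f (t + h) - f t) with (h * ((f (t + h) - f t) / h)) by (field; lra).
  rewrite Rabs_mult, Rabs_right by lra.
  apply Rle_lt_trans with (h * (Rabs l + 1 + 1)).
  apply Rmult_le_compat_l; lra.
  pose proof (Rabs_pos l).
  apply Rmult_lt_reg_r with (/ (Rabs l + 1 + 1)). apply Rinv_0_lt_compat; lra.
  replace (h * (Rabs l + 1 + 1) * / (Rabs l + 1 + 1)) with h by (field; lra). exact H1.
Qed.

Lemma rd_minus f g t l1 l2 : right_deriv f t l1 -> right_deriv g t l2 -> right_deriv (fun s => f s - g s) t (l1 - l2).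
Proof. intros H1 H2 e He. destruct (H1 (e/2)) as [d1 [Hd1 H1']]; [lra|]. destruct (H2 (e/2)) as [d2 [Hd2 H2']]; [lra|].
  exists (Rmin d1 d2); split. apply Rmin_pos; auto. intros h Hh.
  assert (h < d1) by (eapply Rlt_le_trans; [apply Hh|apply Rmin_l]).
  assert (h < d2) by (eapply Rlt_le_trans; [apply Hh|apply Rmin_r]).
  specialize (H1' h (conj (proj1 Hh) H)). specialize (H2' h (conj (proj1 Hh) H0)).
  replace ((f (t + h) - g (t + h) - (f t - g t)) / h - (l1 - l2)) with
    (((f (t + h) - f t) / h - l1) - ((g (t + h) - g t) / h - l2)) by (field; lra).
  eapply Rle_lt_trans; [apply Rabs_triang|]. rewrite Rabs_Ropp. lra.
Qed.

Lemma sol_minus n A x y : is_solution n A x -> is_solution n A y -> is_solution n A (fun t i => x t i - y t i).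
Proof. intros Hx Hy i Hi. destruct (Hx i Hi) as [Hx1 Hx2]. destruct (Hy i Hi) as [Hy1 Hy2]. split.
  - intros t Ht. apply continuity_pt_minus; auto.
  - intros t Ht. rewrite mat_vec_sub. apply rd_minus; auto.
Qed.

Lemma rd_local f g t l d : 0 < d -> (forall h, 0 <= h < d -> f (t + h) = g (t + h)) -> right_deriv g t l -> right_deriv f t l.
Proof. intros Hd Hfg H e He. destruct (H e He) as [d' [Hd' H']]. exists (Rmin d d'). split. apply Rmin_pos; auto.
  intros h Hh. assert (h < d) by (eapply Rlt_le_trans; [apply Hh|apply Rmin_l]).
  assert (h < d') by (eapply Rlt_le_trans; [apply Hh|apply Rmin_r]).
  rewrite Hfg by lra. replace t with (t + 0) at 2 by ring. rewrite Hfg by lra. rewrite Rplus_0_r. apply H'; lra. Qed.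

Lemma rd_shift f c t l : right_deriv f (t + c) l -> right_deriv (fun s => f (s + c)) t l.
Proof. intros H e He. destruct (H e He) as [d [Hd H']]. exists d; split; auto. intros h Hh.
  replace (t + h + c) with (t + c + h) by ring. apply H'; auto. Qed.

Definition concatf (h : R) (z w : R -> nat -> R) : R -> nat -> R :=
  fun t i => if Rlt_dec t h then z t i else w (t - h) i.

Lemma concat_sol n A z w h : 0 < h -> is_solution n (fun _ => A) z -> is_solution n (fun _ => A) w ->
  (forall i, (i < n)%nat -> w 0 i = z h i) -> is_solution n (fun _ => A) (concatf h z w).
Proof. intros Hh Hz Hw Hzw i Hi. destruct (Hz i Hi) as [Hz1 Hz2]. destruct (Hw i Hi) as [Hw1 Hw2]. split.
  - intros t Ht. apply cont_of_eps. intros e He. unfold concatf.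
    destruct (Rlt_dec t h) as [Hth|Hth].
    + destruct (eps_of_cont _ _ (Hz1 t Ht) e He) as [d [Hd H]]. exists (Rmin d (h - t)). split. apply Rmin_pos; lra.
      intros s Hs. assert (Rabs (s - t) < d) by (eapply Rlt_le_trans; [apply Hs|apply Rmin_l]).
      assert (Rabs (s - t) < h - t) by (eapply Rlt_le_trans; [apply Hs|apply Rmin_r]).
      destruct (Rlt_dec s h) as [|Hsh]. apply H; auto. exfalso. apply Rabs_def2 in H1. lra.
    + destruct (Req_dec t h) as [->|Hne].
      * destruct (eps_of_cont _ _ (Hz1 h Hh) e He) as [d [Hd H]].
        destruct (rd_cont _ _ _ (Hw2 0 (Rle_refl 0)) e He) as [d2 [Hd2 H2]].
        exists (Rmin d d2). split. apply Rmin_pos; lra.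
        intros s Hs. assert (Rabs (s - h) < d) by (eapply Rlt_le_trans; [apply Hs|apply Rmin_l]).
        assert (Rabs (s - h) < d2) by (eapply Rlt_le_trans; [apply Hs|apply Rmin_r]).
        replace (h - h) with 0 by ring. rewrite Hzw by auto.
        destruct (Rlt_dec s h) as [|Hsh]. apply H; auto.
        destruct (Req_dec s h) as [->|Hne']. replace (h - h) with 0 by ring. rewrite Hzw by auto. unfold Rminus; rewrite Rplus_opp_r, Rabs_R0; auto.
        rewrite <- Hzw by auto. replace (s - h) with (0 + (s - h)) by ring. apply H2.
        apply Rabs_def2 in H1. lra.
      * assert (t - h > 0) by lra.
        destruct (eps_of_cont _ _ (Hw1 (t - h) H) e He) as [d [Hd H']]. exists (Rmin d (t - h)). split. apply Rmin_pos; lra.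
        intros s Hs. assert (Rabs (s - t) < d) by (eapply Rlt_le_trans; [apply Hs|apply Rmin_l]).
        assert (Rabs (s - t) < t - h) by (eapply Rlt_le_trans; [apply Hs|apply Rmin_r]).
        apply Rabs_def2 in H1. destruct (Rlt_dec s h) as [|]. lra. apply H'.
        replace (s - h - (t - h)) with (s - t) by ring. auto.
  - intros t Ht. unfold concatf at 2.
    destruct (Rlt_dec t h) as [Hth|Hth].
    + replace (mat_vec n A (concatf h z w t) i) with (mat_vec n A (z t) i).
      2:{ apply mat_vec_ext. intros j _. unfold concatf. destruct (Rlt_dec t h); [reflexivity|lra]. }
      apply rd_local with (fun s => z s i) (h - t). lra. intros h' Hh'. unfold concatf.
      destruct (Rlt_dec (t + h') h); [reflexivity|lra]. apply Hz2; auto.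
    + replace (mat_vec n A (concatf h z w t) i) with (mat_vec n A (w (t - h)) i).
      2:{ apply mat_vec_ext. intros j _. unfold concatf. destruct (Rlt_dec t h); [lra|reflexivity]. }
      apply rd_local with (fun s => w (s + - h) i) 1. lra. intros h' Hh'. unfold concatf.
      destruct (Rlt_dec (t + h') h); [lra|reflexivity].
      apply (rd_shift (fun s => w s i) (- h)). apply Hw2. lra.
Qed.

Module Part4.
Import Coquelicot.Coquelicot.

Lemma lub_props (E : R -> Prop) r0 B : E r0 -> (forall r, E r -> r <= B) ->
  (forall r, E r -> r <= real (Lub_Rbar E)) /\ real (Lub_Rbar E) <= B.
Proof. intros H0 HB. destruct (Lub_Rbar_correct E) as [Hub Hl].
  assert (Hle : Rbar_le (Lub_Rbar E) B) by (apply Hl; intros r Hr; apply HB; auto).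
  pose proof (Hub r0 H0) as H1.
  destruct (Lub_Rbar E) as [l| |]; simpl in *; try contradiction.
  split; auto. Qed.

Definition Ews n A a (v : nat -> R) (r : R) : Prop :=
  exists z s, is_solution n (fun _ => A) z /\ (forall i, (i < n)%nat -> z 0 i = v i) /\ 0 <= s /\
    r = exp (a * s) * vnorm n (z s).

Definition W n A a v := real (Lub_Rbar (Ews n A a v)).

Section WP.
Variables (n : nat) (A : nat -> nat -> R) (a C : R).
Hypothesis Hstab : forall z, is_solution n (fun _ => A) z -> forall t, 0 <= t ->
  vnorm n (z t) <= C * exp (- (a * t)) * vnorm n (z 0).

Lemma Ews_bound v r : Ews n A a v r -> r <= C * vnorm n v.
Proof. intros [z [s [Hz [H0 [Hs ->]]]]]. rewrite <- (vnorm_ext n (z 0) v H0).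
  eapply Rle_trans. apply Rmult_le_compat_l. left; apply exp_pos. apply Hstab; auto.
  replace (exp (a * s) * (C * exp (- (a * s)) * vnorm n (z 0))) with (C * vnorm n (z 0) * (exp (a * s) * exp (- (a * s)))) by ring.
  rewrite <- exp_plus. replace (a * s + - (a * s)) with 0 by ring. rewrite exp_0. lra. Qed.

Lemma Ews_nonempty v : Ews n A a v (vnorm n v).
Proof. destruct (exists_sol n A v) as [z [Hz H0]]. exists z, 0. split; [auto|split; [intros; auto|split; [lra|]]].
  rewrite Rmult_0_r, exp_0, Rmult_1_l. apply vnorm_ext. intros; rewrite H0; auto. Qed.

Lemma W_ge v : vnorm n v <= W n A a v.
Proof. apply (proj1 (lub_props _ _ _ (Ews_nonempty v) (Ews_bound v))). apply Ews_nonempty. Qed.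
Lemma W_le v : W n A a v <= C * vnorm n v.
Proof. apply (proj2 (lub_props _ _ _ (Ews_nonempty v) (Ews_bound v))). Qed.
Lemma W_nonneg v : 0 <= W n A a v.
Proof. eapply Rle_trans; [apply vnorm_nonneg|apply W_ge]. Qed.

Lemma W_lip v w : W n A a v <= W n A a w + C * vnorm n (fun i => v i - w i).
Proof. refine (proj2 (lub_props _ _ _ (Ews_nonempty v) _)).
  intros r [z [s [Hz [H0 [Hs ->]]]]].
  destruct (exists_sol n A (fun i => v i - w i)) as [y [Hy Hy0]].
  assert (E1 : Ews n A a w (exp (a * s) * vnorm n (fun i => z s i - y s i))).
  { exists (fun t i => z t i - y t i), s. split; [apply sol_minus; auto|split; [|split; [auto|reflexivity]]].
    intros i Hi. rewrite H0, Hy0 by auto. ring. }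
  assert (E2 : Ews n A a (fun i => v i - w i) (exp (a * s) * vnorm n (y s))).
  { exists y, s. split; [auto|split; [intros; auto|split; [auto|reflexivity]]]. }
  pose proof (proj1 (lub_props _ _ _ (Ews_nonempty w) (Ews_bound w)) _ E1).
  pose proof (Ews_bound _ _ E2).
  eapply Rle_trans. apply Rmult_le_compat_l. left; apply exp_pos. apply (vnorm_sub_le n (z s) (y s)).
  eapply Rle_trans with (exp (a * s) * vnorm n (fun i => z s i - y s i) + exp (a * s) * vnorm n (y s)).
  right.
  replace (vnorm n (fun i => z s i - (z s i - y s i))) with (vnorm n (y s)).
  rewrite (Rplus_comm (vnorm n (y s))). ring. apply vnorm_ext; intros; ring.
  unfold W. lra. Qed.

Lemma W_decay z h : is_solution n (fun _ => A) z -> 0 <= h -> W n A a (z h) <= exp (- (a * h)) * W n A a (z 0).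
Proof. intros Hz Hh. destruct (Req_dec h 0) as [->|Hne].
  rewrite Rmult_0_r, Ropp_0, exp_0; lra.
  refine (proj2 (lub_props _ _ _ (Ews_nonempty _) _)).
  intros r [w [s [Hw [H0 [Hs ->]]]]].
  assert (E : Ews n A a (z 0) (exp (a * (h + s)) * vnorm n (concatf h z w (h + s)))).
  { exists (concatf h z w), (h + s). split; [apply concat_sol; auto; lra|split; [|split; [lra|reflexivity]]].
    intros i Hi. unfold concatf. destruct (Rlt_dec 0 h); [reflexivity|lra]. }
  pose proof (proj1 (lub_props _ _ _ (Ews_nonempty _) (Ews_bound _)) _ E).
  replace (vnorm n (concatf h z w (h + s))) with (vnorm n (w s)) in H.
  2:{ apply vnorm_ext. intros i _. unfold concatf. destruct (Rlt_dec (h + s) h). lra. f_equal. ring. }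
  unfold W. rewrite Rmult_plus_distr_l, exp_plus in H.
  apply Rmult_le_reg_l with (exp (a * h)). apply exp_pos.
  assert (exp (a * h) * exp (- (a * h)) = 1) by (rewrite <- exp_plus; replace (a * h + - (a * h)) with 0 by ring; apply exp_0).
  replace (exp (a * h) * (exp (- (a * h)) * real (Lub_Rbar (Ews n A a (z 0))))) with (real (Lub_Rbar (Ews n A a (z 0)))) by (rewrite <- Rmult_assoc, H1; ring).
  rewrite <- Rmult_assoc. exact H.
Qed.
End WP.

End Part4.
Import Part4.


Lemma real_ind (a b : R) (P : R -> Prop) : a <= b -> P a ->
  (forall u, a <= u < b -> P u -> exists e, 0 < e /\ forall s, u < s < u + e -> P s) ->
  (forall u, a < u <= b -> (forall s, a <= s < u -> P s) -> P u) ->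
  forall u, a <= u <= b -> P u.
Proof. intros Hab Ha Hr Hl T HT. apply NNPP. intros HnT.
  set (E := fun t => a <= t <= T /\ forall s, a <= s <= t -> P s).
  assert (Hb : bound E) by (exists T; intros t Ht; apply Ht).
  assert (Hne : exists t, E t) by (exists a; split; [lra|intros s Hs; replace s with a by lra; auto]).
  destruct (completeness E Hb Hne) as [m [Hub Hlub]].
  assert (HaE : E a) by (split; [lra|intros s Hs; replace s with a by lra; auto]).
  assert (Ham : a <= m) by (apply Hub; auto).
  assert (HmT : m <= T) by (apply Hlub; intros t Ht; apply Ht).
  assert (Hbelow : forall s, a <= s < m -> P s).
  { intros s Hs. apply NNPP; intros Hns.
    assert (is_upper_bound E s).
    { intros t [Ht1 Ht2]. apply Rnot_lt_le. intros Hst. apply Hns, Ht2. lra. }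
    specialize (Hlub s H). lra. }
  assert (Pm : P m).
  { destruct (Req_dec m a) as [->|Hne']. auto. apply Hl. lra. auto. }
  assert (HmT' : m < T). { destruct (Req_dec m T) as [->|]; [contradiction|lra]. }
  destruct (Hr m ltac:(lra) Pm) as [e [He Hs]].
  set (t' := Rmin (m + e / 2) T).
  assert (Ht' : E t').
  { split. unfold t'. split. apply Rmin_glb; lra. apply Rmin_r.
    intros s Hs'. destruct (Rlt_dec s m). apply Hbelow; lra. destruct (Req_dec s m) as [->|]. auto.
    apply Hs. assert (t' <= m + e / 2) by apply Rmin_l. lra. }
  specialize (Hub t' Ht'). unfold t' in Hub. apply (Rmin_case (m + e / 2) T (fun r => r <= m -> False)); lra.
Qed.

Lemma le_eps X Y c : 0 <= c -> (forall eta, 0 < eta -> X <= Y + eta * c) -> X <= Y.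
Proof. intros Hc H. apply Rnot_lt_le; intros HYX.
  specialize (H ((X - Y) / (2 * (c + 1))) ltac:(apply Rdiv_lt_0_compat; lra)).
  assert ((X - Y) / (2 * (c + 1)) * c < X - Y).
  { apply Rmult_lt_reg_r with (2 * (c + 1)). lra.
    replace ((X - Y) / (2 * (c + 1)) * c * (2 * (c + 1))) with ((X - Y) * c) by (field; lra). nra. }
  lra. Qed.

Lemma decay (f : R -> R) (beta a b : R) : a <= b ->
  (forall u, a <= u <= b -> 0 <= f u) ->
  (forall u, a < u <= b -> continuity_pt f u) ->
  (forall u, a <= u < b -> forall eps, 0 < eps -> exists d, 0 < d /\
     forall h, 0 < h < d -> f (u + h) <= f u - h * beta * f u + h * eps) ->
  f b <= exp (- (beta * (b - a))) * f a.
Proof. intros Hab Hpos Hc Hd.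
  set (g := fun s => exp (beta * (s - a)) * f s).
  assert (Main : forall eta, 0 < eta -> g b <= f a + eta * (b - a)).
  { intros eta Heta.
    apply (real_ind a b (fun u => g u <= f a + eta * (u - a))); [lra| | | |lra].
    - unfold g. replace (a - a) with 0 by ring. rewrite Rmult_0_r, exp_0. lra.
    - intros u Hu Pu. set (K := exp (beta * (u - a))). assert (HK : 0 < K) by apply exp_pos.
      destruct (Hd u Hu (eta / (2 * K))) as [d [Hdp Hd']]. apply Rdiv_lt_0_compat; lra.
      set (d2 := ln 2 / (Rabs beta + 1)).
      assert (Hl2 : 0 < ln 2) by (rewrite <- ln_1; apply ln_increasing; lra).
      assert (Hd2 : 0 < d2) by (unfold d2; apply Rdiv_lt_0_compat; pose proof (Rabs_pos beta); lra).
      exists (Rmin d d2). split. apply Rmin_pos; auto.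
      intros s Hs. set (h := s - u). assert (Hh : 0 < h < d) by (unfold h; assert (Rmin d d2 <= d) by apply Rmin_l; lra).
      assert (Hhd2 : h <= d2) by (unfold h; assert (Rmin d d2 <= d2) by apply Rmin_r; lra).
      specialize (Hd' h Hh). replace (u + h) with s in Hd' by (unfold h; ring).
      assert (E1 : exp (beta * h) <= 2).
      { rewrite <- (exp_ln 2) by lra. apply exp_le_3 || idtac.
        destruct (Rle_lt_dec (beta * h) (ln 2)) as [Hle|Hgt].
        destruct Hle as [Hlt|Heq]. left; apply exp_increasing; auto. rewrite Heq; lra.
        exfalso. assert (beta * h <= Rabs beta * h) by (apply Rmult_le_compat_r; [lra|apply Rle_abs]).
        assert (Rabs beta * h <= Rabs beta * d2) by (apply Rmult_le_compat_l; [apply Rabs_pos|lra]).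
        assert (Rabs beta * d2 < ln 2).
        { unfold d2. apply Rmult_lt_reg_r with (Rabs beta + 1). pose proof (Rabs_pos beta); lra.
          replace (Rabs beta * (ln 2 / (Rabs beta + 1)) * (Rabs beta + 1)) with (Rabs beta * ln 2) by (field; pose proof (Rabs_pos beta); lra).
          pose proof (Rabs_pos beta); nra. }
        lra. }
      assert (E2 : exp (beta * h) * (1 - h * beta) <= 1).
      { pose proof (exp_ineq1_le (- (beta * h))).
        assert (exp (beta * h) * exp (- (beta * h)) = 1) by (rewrite <- exp_plus; replace (beta * h + - (beta * h)) with 0 by ring; apply exp_0).
        pose proof (exp_pos (beta * h)). nra. }
      assert (Hfu : 0 <= f u) by (apply Hpos; lra).
      unfold g. replace (exp (beta * (s - a))) with (K * exp (beta * h)) by (unfold K, h; rewrite <- exp_plus; f_equal; ring).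
      assert (Hfs : f s <= f u * (1 - h * beta) + h * (eta / (2 * K))) by nra.
      assert (K * exp (beta * h) * f s <= K * (exp (beta * h) * (f u * (1 - h * beta))) + K * exp (beta * h) * (h * (eta / (2 * K)))).
      { pose proof (exp_pos (beta * h)).
        eapply Rle_trans. apply Rmult_le_compat_l; [|apply Hfs]. nra. right; ring. }
      assert (K * (exp (beta * h) * (f u * (1 - h * beta))) <= K * f u).
      { apply Rmult_le_compat_l. lra.
        replace (exp (beta * h) * (f u * (1 - h * beta))) with (f u * (exp (beta * h) * (1 - h * beta))) by ring.
        nra. }
      assert (K * exp (beta * h) * (h * (eta / (2 * K))) <= eta * h).
      { replace (K * exp (beta * h) * (h * (eta / (2 * K)))) with ((h * eta) * (exp (beta * h) / 2)) by (field; lra).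
        replace (eta * h) with ((h * eta) * 1) by ring. apply Rmult_le_compat_l. nra. lra. }
      unfold g in Pu. fold K in Pu. unfold h in *. nra.
    - intros u Hu Hbel. apply (le_eps _ _ 1); [lra|]. intros e He.
      assert (Hcg : continuity_pt g u).
      { unfold g. apply (continuity_pt_mult (fun s => exp (beta * (s - a))) f). reg. apply Hc; auto. }
      destruct (eps_of_cont g u Hcg e He) as [d [Hdp Hd']].
      set (s := Rmax a (u - d / 2)).
      assert (Hs1 : a <= s) by apply Rmax_l. assert (Hs2 : u - d / 2 <= s) by apply Rmax_r.
      assert (Hs3 : s < u) by (unfold s; apply Rmax_lub_lt; lra).
      specialize (Hbel s (conj Hs1 Hs3)). assert (Rabs (s - u) < d) by (rewrite Rabs_left; lra).
      specialize (Hd' s H). apply Rabs_def2 in Hd'. nra. }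
  assert (Hg : exp (beta * (b - a)) * f b <= f a).
  { apply (le_eps _ _ (b - a)); [lra|]. intros eta Heta. pose proof (Main eta Heta) as HM. unfold g in HM. lra. }
  assert (exp (- (beta * (b - a))) * exp (beta * (b - a)) = 1) by (rewrite <- exp_plus; replace (- (beta * (b - a)) + beta * (b - a)) with 0 by ring; apply exp_0).
  pose proof (exp_pos (- (beta * (b - a)))).
  replace (f b) with (exp (- (beta * (b - a))) * (exp (beta * (b - a)) * f b)) by (rewrite <- Rmult_assoc, H; ring).
  apply Rmult_le_compat_l; lra.
Qed.


Lemma exp_mono x y : x <= y -> exp x <= exp y.
Proof. intros [H|H]; [left; apply exp_increasing; auto|rewrite H; lra]. Qed.

Lemma unif n p (M : nat -> nat -> nat -> R) : (forall k, (1 <= k <= p)%nat -> exp_stable n (M k)) ->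
  exists a C, 0 < a /\ 1 <= C /\ forall k, (1 <= k <= p)%nat -> forall z, is_solution n (fun _ => M k) z ->
    forall t, 0 <= t -> vnorm n (z t) <= C * exp (- (a * t)) * vnorm n (z 0).
Proof. induction p; intros H.
  - exists 1, 1. split; [lra|split; [lra|intros; lia]].
  - destruct IHp as [a [C [Ha [HC IH]]]]. intros; apply H; lia.
    destruct (H (S p)) as [c [a' [Hc [Ha' Hs]]]]. lia.
    exists (Rmin a a'), (Rmax C c). split. apply Rmin_pos; auto. split. eapply Rle_trans; [apply HC|apply Rmax_l].
    intros k Hk z Hz t Ht.
    assert (E : forall C0 a0, 0 <= C0 <= Rmax C c -> Rmin a a' <= a0 -> C0 * exp (- (a0 * t)) * vnorm n (z 0) <= Rmax C c * exp (- (Rmin a a' * t)) * vnorm n (z 0)).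
    { intros C0 a0 H1 H2. apply Rmult_le_compat_r. apply vnorm_nonneg.
      assert (exp (- (a0 * t)) <= exp (- (Rmin a a' * t))).
      { apply exp_mono. assert (Rmin a a' * t <= a0 * t) by (apply Rmult_le_compat_r; lra). lra. }
      pose proof (exp_pos (- (a0 * t))). apply Rmult_le_compat; lra. }
    destruct (Nat.eq_dec k (S p)) as [->|Hne].
    + eapply Rle_trans; [apply Hs; auto|]. apply E. split; [lra|apply Rmax_r]. apply Rmin_r.
    + eapply Rle_trans; [apply (IH k); auto; lia|]. apply E. split; [lra|apply Rmax_l]. apply Rmin_l.
Qed.

Lemma exp_neg_le y : 0 <= y -> exp (- y) <= 1 - y + y * y.
Proof. intros Hy. pose proof (exp_ineq1_le y).
  assert (exp y * exp (- y) = 1) by (rewrite <- exp_plus; replace (y + - y) with 0 by ring; apply exp_0).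
  pose proof (exp_pos (- y)). pose proof (exp_pos y).
  assert ((1 - y + y * y) * (1 + y) >= 1) by nra. nra. Qed.

Section Dini.
Variables (n : nat) (A N : nat -> nat -> R) (a C g : R).
Hypothesis Hstab : forall z, is_solution n (fun _ => A) z -> forall t, 0 <= t ->
  vnorm n (z t) <= C * exp (- (a * t)) * vnorm n (z 0).
Hypothesis Ha : 0 < a.
Hypothesis HC : 1 <= C.
Hypothesis Hg : 0 < g.

Lemma W_eq v w : (forall i, (i < n)%nat -> v i = w i) -> W n A a v = W n A a w.
Proof. intros H.
  assert (vnorm n (fun i => v i - w i) = 0).
  { rewrite (vnorm_ext n _ (fun _ => 0 * 0)). rewrite vnorm_scal, Rabs_R0. ring. intros; rewrite H; auto; ring. }
  assert (vnorm n (fun i => w i - v i) = 0).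
  { rewrite (vnorm_ext n _ (fun _ => 0 * 0)). rewrite vnorm_scal, Rabs_R0. ring. intros; rewrite H; auto; ring. }
  pose proof (W_lip n A a C Hstab v w). pose proof (W_lip n A a C Hstab w v). nra. Qed.

Lemma W_abs_lip v w : Rabs (W n A a v - W n A a w) <= C * vnorm n (fun i => v i - w i).
Proof. pose proof (W_lip n A a C Hstab v w). pose proof (W_lip n A a C Hstab w v).
  assert (vnorm n (fun i => w i - v i) = vnorm n (fun i => v i - w i)).
  { rewrite (vnorm_ext n (fun i => w i - v i) (fun i => -1 * (v i - w i))). rewrite vnorm_scal.
    replace (Rabs (-1)) with 1. ring. rewrite Rabs_left by lra; ring. intros; ring. }
  rewrite H1 in H0. apply Rabs_le; split; lra. Qed.

Lemma W_dini x u : 0 <= u ->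
  (forall i, (i < n)%nat -> right_deriv (fun s => x s i) u (mat_vec n (fun i j => N i j + g * A i j) (x u) i)) ->
  forall eps, 0 < eps -> exists d, 0 < d /\ forall h, 0 < h < d ->
    W n A a (x (u + h)) <= W n A a (x u) - h * (a * g - C * mnorm n N) * W n A a (x u) + h * eps.
Proof. intros Hu Hx eps Heps.
  destruct (exists_sol n A (x u)) as [z [Hz Hz0]].
  set (e0 := eps / (4 * C * (INR n + 1))).
  assert (He0 : 0 < e0) by (unfold e0; apply Rdiv_lt_0_compat; [lra|]; pose proof (pos_INR n); nra).
  destruct (fin_delta n (fun i d => forall h, 0 < h < d ->
     Rabs (x (u + h) i - z (g * h) i - h * mat_vec n N (x u) i) <= 2 * h * e0)) as [d1 [Hd1 H1]].
  { intros i d d' Hdd H h Hh. apply H; lra. }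
  { intros i Hi. destruct (Hx i Hi e0 He0) as [da [Hda Ha']].
    destruct (proj2 (Hz i Hi) 0 (Rle_refl 0) (e0 / g)) as [db [Hdb Hb']]. apply Rdiv_lt_0_compat; lra.
    exists (Rmin da (db / g)). split. apply Rmin_pos; auto. apply Rdiv_lt_0_compat; lra.
    intros h Hh. assert (h < da) by (eapply Rlt_le_trans; [apply Hh|apply Rmin_l]).
    assert (h < db / g) by (eapply Rlt_le_trans; [apply Hh|apply Rmin_r]).
    specialize (Ha' h (conj (proj1 Hh) H)).
    assert (Hgh : 0 < g * h < db).
    { split. nra. apply Rmult_lt_reg_r with (/ g). apply Rinv_0_lt_compat; lra.
      replace (g * h * / g) with h by (field; lra). exact H0. }
    specialize (Hb' (g * h) Hgh). rewrite Rplus_0_l in Hb'.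
    rewrite mat_vec_madd in Ha'.
    rewrite (mat_vec_ext n A (z 0) (x u)) in Hb' by (intros; apply Hz0).
    rewrite Hz0 in Hb'.
    set (P := (x (u + h) i - x u i) / h - (mat_vec n N (x u) i + g * mat_vec n A (x u) i)) in Ha'.
    set (Q := (z (g * h) i - x u i) / (g * h) - mat_vec n A (x u) i) in Hb'.
    replace (x (u + h) i - z (g * h) i - h * mat_vec n N (x u) i) with (h * P - (g * h) * Q) by (unfold P, Q; field; lra).
    eapply Rle_trans; [apply Rabs_triang|]. rewrite Rabs_Ropp, !Rabs_mult, !Rabs_right by nra.
    assert (HP : h * Rabs P <= h * e0) by (apply Rmult_le_compat_l; lra).
    assert (HQ : g * h * Rabs Q <= g * h * (e0 / g)) by (apply Rmult_le_compat_l; nra).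
    replace (g * h * (e0 / g)) with (h * e0) in HQ by (field; lra). rewrite (Rabs_right g) by lra. lra. }
  set (Wu := W n A a (x u)).
  assert (HWu : 0 <= Wu) by apply (W_nonneg n A a C Hstab).
  assert (Hag2 : 0 <= (a * g) * (a * g) * Wu) by (apply Rmult_le_pos; [nra|auto]).
  set (d2 := eps / (2 * ((a * g) * (a * g) * Wu + 1))).
  assert (Hd2 : 0 < d2) by (unfold d2; apply Rdiv_lt_0_compat; lra).
  exists (Rmin d1 d2). split. apply Rmin_pos; auto.
  intros h Hh. assert (Hhd1 : h < d1) by (eapply Rlt_le_trans; [apply Hh|apply Rmin_l]).
  assert (Hhd2 : h < d2) by (eapply Rlt_le_trans; [apply Hh|apply Rmin_r]).
  assert (Hgh : 0 <= g * h) by nra.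
  pose proof (W_decay n A a C Hstab z (g * h) Hz Hgh) as HD.
  rewrite (W_eq (z 0) (x u)) in HD by (intros; apply Hz0).
  pose proof (W_lip n A a C Hstab (x (u + h)) (z (g * h))) as HL.
  assert (HV : vnorm n (fun i => x (u + h) i - z (g * h) i) <= h * (mnorm n N * vnorm n (x u)) + INR n * (2 * h * e0)).
  { eapply Rle_trans. apply (vnorm_sub_le n _ (fun i => h * mat_vec n N (x u) i)).
    apply Rplus_le_compat. rewrite vnorm_scal, Rabs_right by lra. apply Rmult_le_compat_l. lra. apply mat_vec_bound.
    apply vnorm_bound. intros i Hi. apply H1; auto; lra. }
  assert (HxW : vnorm n (x u) <= Wu) by apply (W_ge n A a C Hstab).
  assert (HE : exp (- (a * (g * h))) <= 1 - a * g * h + (a * g * h) * (a * g * h)).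
  { replace (a * (g * h)) with (a * g * h) by ring. apply exp_neg_le. nra. }
  assert (Hsq : h * ((a * g) * (a * g) * Wu) <= eps / 2).
  { assert (h * ((a * g) * (a * g) * Wu + 1) <= eps / 2).
    { apply Rle_trans with (d2 * ((a * g) * (a * g) * Wu + 1)). apply Rmult_le_compat_r; nra.
      unfold d2. right; field. nra. }
    nra. }
  assert (HCe : C * (INR n * (2 * h * e0)) <= h * (eps / 2)).
  { unfold e0. pose proof (pos_INR n).
    replace (C * (INR n * (2 * h * (eps / (4 * C * (INR n + 1)))))) with (h * (eps / 2) * (INR n / (INR n + 1))) by (field; lra).
    replace (h * (eps / 2)) with (h * (eps / 2) * 1) at 2 by ring.
    apply Rmult_le_compat_l. nra. apply Rmult_le_reg_r with (INR n + 1). lra.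
    replace (INR n / (INR n + 1) * (INR n + 1)) with (INR n) by (field; lra). lra. }
  pose proof (mnorm_nonneg n N).
  assert (C * vnorm n (fun i => x (u + h) i - z (g * h) i) <= C * (h * (mnorm n N * Wu)) + h * (eps / 2)).
  { eapply Rle_trans. apply Rmult_le_compat_l. lra. apply HV.
    assert (C * (h * (mnorm n N * vnorm n (x u))) <= C * (h * (mnorm n N * Wu))).
    { apply Rmult_le_compat_l. lra. apply Rmult_le_compat_l. lra. apply Rmult_le_compat_l; lra. }
    lra. }
  assert (exp (- (a * (g * h))) * Wu <= (1 - a * g * h + (a * g * h) * (a * g * h)) * Wu) by (apply Rmult_le_compat_r; lra).
  fold Wu in HD. nra.
Qed.
End Dini.


Section Main.
Variables (n p : nat) (M : nat -> nat -> nat -> R) (N : nat -> nat -> R) (a C g : R)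
  (sigma : R -> nat) (x : R -> nat -> R).
Hypothesis Hs : forall k, (1 <= k <= p)%nat -> forall z, is_solution n (fun _ => M k) z ->
    forall t, 0 <= t -> vnorm n (z t) <= C * exp (- (a * t)) * vnorm n (z 0).
Hypothesis Ha : 0 < a.
Hypothesis HC : 1 <= C.
Hypothesis Hg : 0 < g.
Hypothesis Hsw : switching_signal p sigma.
Hypothesis Hx : is_solution n (fun t i j => N i j + g * M (sigma t) i j) x.

Definition beta := a * g - C * mnorm n N.
Definition F k s := W n (M k) a (x s).

Lemma F_cont k u : (1 <= k <= p)%nat -> 0 < u -> continuity_pt (F k) u.
Proof. intros Hk Hu. apply cont_of_eps. intros e He.
  set (e' := e / (C * (INR n + 1))).
  assert (He' : 0 < e') by (unfold e'; apply Rdiv_lt_0_compat; [lra|]; pose proof (pos_INR n); nra).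
  destruct (fin_delta n (fun i d => forall s, Rabs (s - u) < d -> Rabs (x s i - x u i) < e')) as [d [Hd H]].
  { intros i d d' Hdd H s Hs'. apply H; lra. }
  { intros i Hi. apply (eps_of_cont (fun s => x s i) u). apply (proj1 (Hx i Hi)); auto. auto. }
  exists d. split; auto. intros s Hsu. unfold F.
  eapply Rle_lt_trans. apply (W_abs_lip n (M k) a C (Hs k Hk)).
  eapply Rle_lt_trans. apply Rmult_le_compat_l. lra. apply (vnorm_bound n _ e').
  intros i Hi. left; apply H; auto.
  unfold e'. pose proof (pos_INR n).
  replace (C * (INR n * (e / (C * (INR n + 1))))) with (e * (INR n / (INR n + 1))) by (field; lra).
  replace e with (e * 1) at 2 by ring. apply Rmult_lt_compat_l; auto.
  apply Rmult_lt_reg_r with (INR n + 1). lra. replace (INR n / (INR n + 1) * (INR n + 1)) with (INR n) by (field; lra). lra.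
Qed.

Lemma F_dini k u : (1 <= k <= p)%nat -> 0 <= u -> sigma u = k -> forall eps, 0 < eps -> exists d, 0 < d /\
  forall h, 0 < h < d -> F k (u + h) <= F k u - h * beta * F k u + h * eps.
Proof. intros Hk Hu Hsu eps Heps. unfold F, beta.
  apply (W_dini n (M k) N a C g (Hs k Hk) Ha HC Hg x u Hu); auto.
  intros i Hi. pose proof (proj2 (Hx i Hi) u Hu) as H. simpl in H. rewrite Hsu in H. exact H.
Qed.

Lemma F_int k u s : (1 <= k <= p)%nat -> 0 <= u <= s -> (forall v, u <= v < s -> sigma v = k) ->
  F k s <= exp (- (beta * (s - u))) * F k u.
Proof. intros Hk Hus Hsig. apply decay. lra.
  - intros v _. unfold F. apply (W_nonneg n (M k) a C (Hs k Hk)).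
  - intros v Hv. apply F_cont; auto; lra.
  - intros v Hv. apply F_dini; auto; lra.
Qed.

Lemma switch_le j k v : (1 <= j <= p)%nat -> (1 <= k <= p)%nat -> W n (M j) a v <= C * W n (M k) a v.
Proof. intros Hj Hk. eapply Rle_trans. apply (W_le n (M j) a C (Hs j Hj)).
  apply Rmult_le_compat_l. lra. apply (W_ge n (M k) a C (Hs k Hk)). Qed.

Definition PP t := exists l : list R, NoDup l /\ (forall s, In s l -> 0 < s <= t /\ discont sigma s) /\
  F (sigma t) t <= C ^ length l * exp (- (beta * t)) * F (sigma 0) 0.

Lemma main_P T : 0 <= T -> PP T.
Proof. intros HT. destruct Hsw as [Hrange [Hright Hleft]].
  apply (real_ind 0 T PP); [lra| | | |lra].
  - exists nil. split; [constructor|split; [intros s []|]]. simpl. rewrite Rmult_0_r, Ropp_0, exp_0. lra.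
  - intros u Hu [l [Hnd [Hl Hb]]]. destruct (Hright u (proj1 Hu)) as [e [He Hc]].
    exists e. split; auto. intros s Hs'. exists l. split; auto. split.
    { intros r Hr. destruct (Hl r Hr); split; auto; lra. }
    assert (Hsk : sigma s = sigma u) by (apply Hc; lra).
    rewrite Hsk. eapply Rle_trans. apply (F_int (sigma u) u s). apply Hrange; lra. lra.
    intros v Hv. apply Hc; lra.
    eapply Rle_trans. apply Rmult_le_compat_l. left; apply exp_pos. apply Hb.
    right. rewrite <- !Rmult_assoc, (Rmult_comm (exp _) (C ^ _)), Rmult_assoc with (r1 := C ^ _).
    rewrite <- exp_plus. f_equal. f_equal. f_equal. ring.
  - intros u Hu Hbel. destruct (Hleft u (proj1 Hu)) as [e [He [k Hk]]].
    set (s := u - Rmin e u / 2).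
    assert (Hm1 : Rmin e u <= e) by apply Rmin_l. assert (Hm2 : Rmin e u <= u) by apply Rmin_r.
    assert (Hm0 : 0 < Rmin e u) by (apply Rmin_pos; lra).
    assert (Hs1 : 0 < s < u) by (unfold s; lra).
    assert (Hs2 : u - e < s) by (unfold s; lra).
    destruct (Hbel s ltac:(lra)) as [l [Hnd [Hl Hb]]].
    assert (Hsk : sigma s = k) by (apply Hk; lra).
    assert (Hkr : (1 <= k <= p)%nat) by (rewrite <- Hsk; apply Hrange; lra).
    assert (Hint : F k u <= exp (- (beta * (u - s))) * F k s).
    { apply F_int; auto. lra. intros v Hv. apply Hk. lra. }
    rewrite Hsk in Hb.
    assert (Hbu : F k u <= C ^ length l * exp (- (beta * u)) * F (sigma 0) 0).
    { eapply Rle_trans. apply Hint. eapply Rle_trans. apply Rmult_le_compat_l. left; apply exp_pos. apply Hb.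
      right. rewrite <- !Rmult_assoc, (Rmult_comm (exp _) (C ^ _)), Rmult_assoc with (r1 := C ^ _).
      rewrite <- exp_plus. f_equal. f_equal. f_equal. ring. }
    destruct (classic (discont sigma u)) as [Hdis|Hndis].
    + exists (u :: l). split. constructor; auto. intros Hin. destruct (Hl u Hin). lra.
      split. intros r [<-|Hr]. split; [lra|auto]. destruct (Hl r Hr); split; auto; lra.
      simpl length. rewrite <- tech_pow_Rmult.
      eapply Rle_trans. unfold F at 1. apply (switch_le (sigma u) k). apply Hrange; lra. auto.
      fold (F k u). replace (C * C ^ length l * exp (- (beta * u)) * F (sigma 0) 0) with (C * (C ^ length l * exp (- (beta * u)) * F (sigma 0) 0)) by ring.
      apply Rmult_le_compat_l; lra.
    + exists l. split; auto. split. intros r Hr. destruct (Hl r Hr); split; auto; lra.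
      assert (Hsu : sigma u = k).
      { unfold discont in Hndis. apply NNPP in Hndis. destruct Hndis as [eta [Heta Heq]].
        set (v := u - Rmin eta e / 2).
        assert (Rmin eta e <= eta) by apply Rmin_l. assert (Rmin eta e <= e) by apply Rmin_r.
        assert (0 < Rmin eta e) by (apply Rmin_pos; lra).
        rewrite <- (Heq v). apply Hk. unfold v; lra. unfold v. rewrite Rabs_left; lra. }
      rewrite Hsu. exact Hbu.
Qed.
End Main.


Theorem lemma4 (n p : nat) (M : nat -> nat -> nat -> R) (N : nat -> nat -> R)
    (tauD N0 lam : R) :
  (forall k, (1 <= k <= p)%nat -> exp_stable n (M k)) ->
  0 < tauD -> 0 < N0 -> 0 < lam ->
  exists g0, 0 < g0 /\
    forall g, g0 <= g ->
      exists c, 0 < c /\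
        forall (sigma : R -> nat) (x : R -> nat -> R),
          switching_signal p sigma ->
          in_Save tauD N0 sigma ->
          is_solution n (fun t i j => N i j + g * M (sigma t) i j) x ->
          forall t, 0 <= t ->
            vnorm n (x t) <= c * exp (- (lam * t)) * vnorm n (x 0).
Proof.
  intros Hst HtauD HN0 Hlam.
  destruct (unif n p M Hst) as [a [C [Ha [HC Hs]]]].
  assert (HlnC : 0 <= ln C).
  { destruct HC as [HC'|HC']. rewrite <- ln_1. left; apply ln_increasing; lra. rewrite <- HC', ln_1; lra. }
  set (KN := mnorm n N). assert (HKN : 0 <= KN) by apply mnorm_nonneg.
  assert (Hq : 0 <= ln C / tauD) by (unfold Rdiv; apply Rmult_le_pos; [auto|left; apply Rinv_0_lt_compat; auto]).
  set (g0 := (lam + C * KN + ln C / tauD) / a + 1).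
  assert (Hg0 : 0 <= (lam + C * KN + ln C / tauD) / a).
  { unfold Rdiv. apply Rmult_le_pos. nra. left; apply Rinv_0_lt_compat; auto. }
  exists g0. split. unfold g0; lra.
  intros g Hgg. assert (Hg : 0 < g) by (unfold g0 in Hgg; lra).
  assert (Hbeta : lam <= beta n N a C g - ln C / tauD).
  { unfold beta. fold KN. assert (a * g0 <= a * g) by (apply Rmult_le_compat_l; lra).
    assert (a * g0 = lam + C * KN + ln C / tauD + a) by (unfold g0; field; lra). lra. }
  exists (C * exp (ln C * (N0 + 1 / tauD))). split. pose proof (exp_pos (ln C * (N0 + 1 / tauD))). nra.
  intros sigma x Hsw Hsave Hx t Ht.
  destruct (main_P n p M N a C g sigma x Hs Ha HC Hg Hsw Hx t Ht) as [l [Hnd [Hl Hb]]].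
  assert (Hlen : INR (length l) <= N0 + (t + 1 - 0) / tauD).
  { apply (Hsave 0 (t + 1)); auto; try lra. intros s Hsl. destruct (Hl s Hsl) as [H1 H2]. split; auto; lra. }
  destruct Hsw as [Hrange _].
  assert (Hr0 : (1 <= sigma 0%R <= p)%nat) by (apply Hrange; lra).
  assert (Hrt : (1 <= sigma t <= p)%nat) by (apply Hrange; lra).
  pose proof (W_ge n (M (sigma t)) a C (Hs _ Hrt) (x t)) as H1.
  pose proof (W_le n (M (sigma 0)) a C (Hs _ Hr0) (x 0)) as H2.
  unfold F in Hb.
  assert (Hpow : C ^ length l <= exp (ln C * (N0 + (t + 1) / tauD))).
  { rewrite <- (exp_ln (C ^ length l)) by (apply pow_lt; lra). rewrite ln_pow by lra.
    apply exp_mono. replace (t + 1 - 0) with (t + 1) in Hlen by ring.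
    rewrite (Rmult_comm (ln C)). apply Rmult_le_compat_r; auto. }
  assert (Hexp : exp (ln C * (N0 + (t + 1) / tauD)) * exp (- (beta n N a C g * t)) <= exp (ln C * (N0 + 1 / tauD)) * exp (- (lam * t))).
  { rewrite <- !exp_plus. apply exp_mono.
    replace (ln C * (N0 + (t + 1) / tauD) + - (beta n N a C g * t)) with
      (ln C * (N0 + 1 / tauD) + - ((beta n N a C g - ln C / tauD) * t)) by (field; lra).
    assert (lam * t <= (beta n N a C g - ln C / tauD) * t) by (apply Rmult_le_compat_r; lra). lra. }
  pose proof (vnorm_nonneg n (x 0)). pose proof (exp_pos (- (beta n N a C g * t))).
  pose proof (W_nonneg n (M (sigma 0)) a C (Hs _ Hr0) (x 0)).
  pose proof (pow_lt C (length l) ltac:(lra)).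
  eapply Rle_trans. apply H1. eapply Rle_trans. apply Hb.
  apply Rle_trans with (exp (ln C * (N0 + (t + 1) / tauD)) * exp (- (beta n N a C g * t)) * (C * vnorm n (x 0))).
  { apply Rmult_le_compat. apply Rmult_le_pos; lra. apply W_nonneg with C. apply Hs; auto.
    apply Rmult_le_compat_r; lra. exact H2. }
  apply Rle_trans with (exp (ln C * (N0 + 1 / tauD)) * exp (- (lam * t)) * (C * vnorm n (x 0))).
  { apply Rmult_le_compat_r. nra. exact Hexp. }
  right; ring.
Qed.
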